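(* Consider a prepare-and-measure QKD protocol with protocol map $\mathcal{E}^{(l)}$ (and ideal map $\mathcal{E}^{(l),\mathrm{ideal}}$) from $A^nB^n$ to $K_A\widetilde C$, in which Alice prepares, in each of $n$ rounds, $\rho^{\mathrm{prep}}_{AA'}=\sum_{i=1}^{d_A}p(i)|i\rangle\langle i|_A\otimes\rho_i$ with $\rho_i$ states on $A'$. Let the shielded protocol be the one in which Alice instead prepares $\rho^{\mathrm{prep}}_{AA_SA'}=\sum_{i=1}^{d_A}p(i)|i\rangle\langle i|_A\otimes|\rho_i\rangle\langle\rho_i|_{A_SA'}$, where $|\rho_i\rangle_{A_SA'}$ is a purification of $\rho_i$, the shield system $A_S$ is not sent to Bob, and the protocol map and ideal map are $\mathcal{E}^{(l)}\circ\mathrm{Tr}_{A_S^n}$ and $\mathcal{E}^{(l),\mathrm{ideal}}\circ\mathrm{Tr}_{A_S^n}$. If the shielded protocol is $\varepsilon_{\mathrm{sec}}$-secret, then the original protocol is $\varepsilon_{\mathrm{sec}}$-secret.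
   Context: A prepare-and-measure QKD protocol with per-round prepared state $\rho^{\mathrm{prep}}_{XA'}$ (Alice keeps $X$, sends $A'$) and protocol/ideal maps $\mathcal{E}^{(l)},\mathcal{E}^{(l),\mathrm{ideal}}$ acting on $X^nB^n$ is $\varepsilon_{\mathrm{sec}}$-secret if $\tfrac12\|((\mathcal{E}^{(l)}-\mathcal{E}^{(l),\mathrm{ideal}})\otimes\mathrm{id}_{E^n})[(\mathrm{id}_{X^n}\otimes\Phi)(\rho^{\mathrm{prep}\,\otimes n}_{XA'})]\|_1\leq\varepsilon_{\mathrm{sec}}$ for all channels $\Phi$ from $A'^n$ to $B^nE^n$ (Eve's attack). Here $X=A$ for the original protocol and $X=AA_S$ for the shielded one. The ideal map is the real protocol with the output key replaced, on acceptance, by a uniformly random key of the same length independent of all other outputs. *)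

(* Defs.v *)
(* An operator on a system with orthonormal basis
   indexed by the finite type T is a function T -> T -> algC (its matrix). *)
From HB Require Import structures.
From mathcomp Require Import all_boot all_order all_algebra.
From mathcomp Require Import algC.
Unset Printing Implicit Defensive.
Import Order.TTheory GRing.Theory Num.Theory.
Local Open Scope ring_scope.


Definition op (T : finType) := T -> T -> algC.
Definition linmap (T U : finType) := op T -> op U.

Definition trace {T : finType} (X : op T) : algC := \sum_(t : T) X t t.
Definition mulop {T : finType} (X Y : op T) : op T :=
  fun t t' => \sum_(s : T) X t s * Y s t'.
Definition adjop {T : finType} (X : op T) : op T := fun t t' => (X t' t)^*.

(* positive semidefinite: <v, X v> >= 0 for every vector v (in algC, 0 <= z
   means z is a nonnegative real; this also forces X Hermitian) *)
Definition psd {T : finType} (X : op T) : Prop :=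
  forall v : T -> algC, 0 <= \sum_(t : T) \sum_(t' : T) (v t)^* * X t t' * v t'.

Definition is_state {T : finType} (X : op T) : Prop := psd X /\ trace X = 1.

(* id_R (x) Phi and Phi (x) id_R *)
Definition idtens (R : finType) {T U : finType} (Phi : linmap T U) : linmap (R * T)%type (R * U)%type :=
  fun X p q => Phi (fun t t' => X (p.1, t) (q.1, t')) p.2 q.2.
Definition tensid {T U : finType} (R : finType) (Phi : linmap T U) : linmap (T * R)%type (U * R)%type :=
  fun X p q => Phi (fun t t' => X (t, p.2) (t', q.2)) p.1 q.1.

Definition is_linear_map {T U : finType} (Phi : linmap T U) : Prop :=
  forall (a : algC) (X Y : op T),
    Phi (fun t t' => a * X t t' + Y t t') = (fun u u' => a * Phi X u u' + Phi Y u u').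
Definition is_CP {T U : finType} (Phi : linmap T U) : Prop :=
  forall (R : finType) (X : op (R * T)%type), psd X -> psd (idtens R Phi X).
Definition is_TP {T U : finType} (Phi : linmap T U) : Prop :=
  forall X : op T, trace (Phi X) = trace X.
Definition is_channel {T U : finType} (Phi : linmap T U) : Prop :=
  [/\ is_linear_map Phi, is_CP Phi & is_TP Phi].

(* (1/2) ||X||_1 <= eps, where ||X||_1 = Tr sqrt(X^dagger X) and sqrt(.) is the
   (unique) positive semidefinite square root *)
Definition half_trnorm_le {T : finType} (X : op T) (eps : algC) : Prop :=
  exists P : op T, [/\ psd P, mulop P P = mulop (adjop X) X & trace P / 2%:R <= eps].

(* n-fold tensor power of rho_{XA'}, with the n copies regrouped as X^n A'^n *)
Definition tpow {X Ap : finType} (n : nat) (rho : op (X * Ap)%type)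
  : op ({ffun 'I_n -> X} * {ffun 'I_n -> Ap})%type :=
  fun p q => \prod_(i < n) rho (p.1 i, p.2 i) (q.1 i, q.2 i).

Definition assoc_op {A B C : finType} (X : op (A * (B * C))%type) : op ((A * B) * C)%type :=
  fun p q => X (p.1.1, (p.1.2, p.2)) (q.1.1, (q.1.2, q.2)).

Definition secret {X Ap B K : finType} (n : nat) (rho : op (X * Ap)%type)
  (E Eid : linmap ({ffun 'I_n -> X} * {ffun 'I_n -> B})%type K) (eps : algC) : Prop :=
  forall (TE : finType)
         (Phi : linmap {ffun 'I_n -> Ap} ({ffun 'I_n -> B} * {ffun 'I_n -> TE})%type),
    is_channel Phi ->
    let sigma := assoc_op (idtens {ffun 'I_n -> X} Phi (tpow n rho)) in
    half_trnorm_le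
      (fun p q => tensid {ffun 'I_n -> TE} E sigma p q
                  - tensid {ffun 'I_n -> TE} Eid sigma p q) eps.

(* key register K_A: None = abort (no key), Some k = key k of length l *)
Definition Key (l : nat) := {ffun 'I_l -> bool}.

(* ideal output: on acceptance the key is replaced by a uniformly random key
   independent of everything else (the conditional output on C~ is kept) *)
Definition ideal_out {l : nat} {C : finType} (Y : op (option (Key l) * C)%type)
  : op (option (Key l) * C)%type :=
  fun p q =>
    match p.1, q.1 with
    | None, None => Y p q
    | Some k, Some k' =>
        (if k == k' then (2 ^ l)%:R^-1 else 0) *
        \sum_(kap : Key l) Y (Some kap, p.2) (Some kap, q.2)
    | _, _ => 0
    end.

(* original prepared state sum_i p(i) |i><i|_A (x) rho_i *)
Definition prep {A Ap : finType} (p : A -> algC) (rho : A -> op Ap) : op (A * Ap)%type :=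
  fun x y => if x.1 == y.1 then p x.1 * rho x.1 x.2 y.2 else 0.

(* shielded prepared state sum_i p(i) |i><i|_A (x) |rho_i><rho_i|_{A_S A'} *)
Definition prep_shield {A S Ap : finType} (p : A -> algC) (psi : A -> S * Ap -> algC)
  : op ((A * S)%type * Ap)%type :=
  fun x y => if x.1.1 == y.1.1
             then p x.1.1 * (psi x.1.1 (x.1.2, x.2) * (psi x.1.1 (y.1.2, y.2))^*)
             else 0.

(* partial trace over the first factor, applied to |psi><psi| *)
Definition ptrace_pure {S Ap : finType} (psi : S * Ap -> algC) : op Ap :=
  fun x y => \sum_(s : S) psi (s, x) * (psi (s, y))^*.

(* Tr_{A_S^n} on A^n A_S^n B^n (the per-round registers (A, A_S) grouped) *)
Definition trS {A S B : finType} {n : nat}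
  (X : op ({ffun 'I_n -> A * S} * {ffun 'I_n -> B})%type) : op ({ffun 'I_n -> A} * {ffun 'I_n -> B})%type :=
  fun p q => \sum_(s : {ffun 'I_n -> S})
               X ([ffun i => (p.1 i, s i)], p.2) ([ffun i => (q.1 i, s i)], q.2).

(* Main.v *)
Require Import Defs.
From mathcomp Require Import all_boot all_order all_algebra.
From mathcomp Require Import algC.
From Stdlib Require Import FunctionalExtensionality.
Import Order.TTheory GRing.Theory Num.Theory.
Local Open Scope ring_scope.

Lemma lin_zero (T U : finType) (Phi : linmap T U) :
  is_linear_map Phi -> Phi (fun _ _ => 0) = (fun _ _ => 0).
Proof.
move=> lin; have h := lin 1 (fun _ _ => 0) (fun _ _ => 0).
have e : (fun t t' : T => (1 : algC) * 0 + 0) = (fun _ _ => 0).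
  by apply: functional_extensionality => t; apply: functional_extensionality => t'; rewrite mulr0 addr0.
rewrite e in h.
apply: functional_extensionality => u; apply: functional_extensionality => u'.
have := f_equal (fun f => f u u') h => /= h2.
rewrite mul1r in h2.
by apply: (@addrI _ (Phi (fun _ _ => 0) u u')); rewrite addr0 -h2.
Qed.


Lemma lin_sum (T U : finType) (I : Type) (Phi : linmap T U) (r : seq I) (M : I -> op T) u u' :
  is_linear_map Phi ->
  \sum_(i <- r) Phi (M i) u u' = Phi (fun x y => \sum_(i <- r) M i x y) u u'.
Proof.
move=> lin; elim: r => [|a r IH].
  rewrite big_nil.
  have -> : (fun x y : T => \sum_(i <- [::]) M i x y) = (fun _ _ => 0).
    by apply: functional_extensionality => x; apply: functional_extensionality => y; rewrite big_nil.
  by rewrite lin_zero.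
rewrite big_cons IH.
have -> : (fun x y : T => \sum_(i <- a :: r) M i x y) =
          (fun x y => 1 * M a x y + (fun x y => \sum_(i <- r) M i x y) x y).
  by apply: functional_extensionality => x; apply: functional_extensionality => y; rewrite big_cons mul1r.
by rewrite lin mul1r.
Qed.

Theorem lemma4 (n l : nat) (A AS Ap B C : finType)
  (p : A -> algC) (rho : A -> op Ap) (psi : A -> AS * Ap -> algC)
  (E : linmap ({ffun 'I_n -> A} * {ffun 'I_n -> B})%type (option (Key l) * C)%type)
  (eps : algC) :
  (forall i, 0 <= p i) -> \sum_(i : A) p i = 1 ->
  (forall i, is_state (rho i)) ->
  (forall i, ptrace_pure (psi i) = rho i) ->
  is_channel E ->
  secret n (prep_shield p psi)
         (fun X => E (trS X)) (fun X => ideal_out (E (trS X))) eps ->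
  secret n (prep p rho) E (fun X => ideal_out (E X)) eps.
Proof.
move=> _ _ _ Hpsi _ Hsec TE Phi chPhi /=.
have := Hsec TE Phi chPhi => /=.
case: chPhi => lin _ _.
set ss := assoc_op _.
set so := assoc_op _.
suff key : forall e e', trS (fun t t' => ss (t, e) (t', e')) = (fun t t' => so (t, e) (t', e')).
  move=> H; match goal with |- half_trnorm_le ?G _ => match type of H with half_trnorm_le ?F _ =>
    have <- : F = G; [|exact H] end end.
  apply: functional_extensionality => P; apply: functional_extensionality => Q.
  by rewrite /tensid /= key.
move=> e e'; apply: functional_extensionality => t; apply: functional_extensionality => t'.
rewrite /trS /ss /so /assoc_op /idtens /=.
rewrite lin_sum //; congr (Phi _ _ _).
apply: functional_extensionality => u; apply: functional_extensionality => u'.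
rewrite /tpow /=.
under eq_bigr do under eq_bigr do rewrite !ffunE.
rewrite -(bigA_distr_bigA (fun i a => prep_shield p psi ((t.1 i, a), u i) ((t'.1 i, a), u' i))) /=.
apply: eq_bigr => i _.
rewrite /prep_shield /prep /=.
case: eqP => _; last by rewrite big1.
by rewrite -mulr_sumr -Hpsi.
Qed.
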